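(* Let $\hat H(w)=e^{-w}$ and let $\alpha,\beta\in\mathbb{R}$ with $\alpha<2$, $\alpha-1<\beta<\alpha^2/4$, and $r_1:=\frac{\alpha-\sqrt{\alpha^2-4\beta}}{2}<-1$. Put $s=|\alpha-\sqrt{\alpha^2-4\beta}|=2|r_1|>2$. Then for $\tilde\tau>0$ and $\omega>0$, if $i\omega$ is a root of $\Phi$ then $\tan\omega>0$ and $\tilde\tau=\omega\tan\omega$; and the smallest $\tilde\tau>0$ for which $\Phi$ has a root on the imaginary axis is $$\tilde\tau_0=\omega_0\tan\omega_0=\arcsin\sqrt{\frac{2}{s}}\cdot\sqrt{\frac{2}{s-2}},\qquad \omega_0=\arcsin\sqrt{\frac{2}{s}},$$ at which $i\omega_0$ is a root.
   Context: For a delay-to-time-constant ratio $\tilde\tau>0$ and $\alpha,\beta\in\mathbb{R}$, the rescaled characteristic equation of the linearized coupled Wilson–Cowan system with kernel transform $\hat H$ is $$\Phi(w):=(w+\tilde\tau)^4-\alpha\,\tilde\tau^2(w+\tilde\tau)^2\hat H(w)^2+\beta\,\tilde\tau^4\hat H(w)^4=0,$$ equivalently $Q(w)^2-\alpha Q(w)+\beta=0$ with $Q(w)=\big(\frac{w+\tilde\tau}{\tilde\tau\hat H(w)}\big)^2$. For the Dirac (discrete) delay kernel, $\hat H(w)=e^{-w}$. *)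

(* Defs.v *)
From Stdlib Require Import Reals.
From Coquelicot Require Import Coquelicot.
Open Scope R_scope.

Definition Cexp (w : C) : C :=
  (exp (fst w) * cos (snd w), exp (fst w) * sin (snd w)).

Definition Hdirac (w : C) : C := Cexp (Copp w).

Definition Phi (H : C -> C) (alpha beta tau : R) (w : C) : C :=
  Cplus (Cminus (Cpow (Cplus w (RtoC tau)) 4)
                (Cmult (RtoC (alpha * tau ^ 2))
                       (Cmult (Cpow (Cplus w (RtoC tau)) 2) (Cpow (H w) 2))))
        (Cmult (RtoC (beta * tau ^ 4)) (Cpow (H w) 4)).

Definition imag (omega : R) : C := (0, omega).

(* Main.v *)
Require Import Defs.
From Stdlib Require Import Reals Lra Psatz.
From Coquelicot Require Import Coquelicot.
Open Scope R_scope.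

Lemma Hdirac_imag w : Hdirac (imag w) = (cos w, - sin w).
Proof. unfold Hdirac, Cexp, imag, Copp. simpl. rewrite Ropp_0, exp_0, cos_neg, sin_neg. f_equal; ring. Qed.

Definition F (r tau w : R) : C :=
  (tau^2 - w^2 - r*tau^2*((cos w)^2 - (sin w)^2), 2*tau*w + 2*r*tau^2*cos w * sin w).

Lemma Phi_factor r1 r2 tau w :
  Phi Hdirac (r1+r2) (r1*r2) tau (imag w) = Cmult (F r1 tau w) (F r2 tau w).
Proof.
  unfold Phi. rewrite Hdirac_imag. unfold F, imag.
  unfold Cminus, Cplus, Cmult, Cpow, Copp, RtoC; simpl.
  f_equal; ring.
Qed.

Lemma Cmult_zero a b : Cmult a b = 0%C -> a = 0%C \/ b = 0%C.
Proof.
  intro H. assert (Cmod a * Cmod b = 0) as H2.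
  { rewrite <- Cmod_mult. change (Cmod (a*b)%C = 0). rewrite H. apply Cmod_0. }
  apply Rmult_integral in H2. destruct H2; [left|right]; now apply Cmod_eq_0.
Qed.

Lemma F_zero_real r tau w : r < 1 -> 0 < tau -> F r tau w = 0%C ->
  tau * cos w - w * sin w = 0 /\ tau^2 + w^2 = - r * tau^2.
Proof.
  intros Hr Ht HF. unfold F in HF.
  assert (H1 : tau ^ 2 - w ^ 2 - r * tau ^ 2 * (cos w ^ 2 - sin w ^ 2) = 0)
    by (apply (f_equal fst) in HF; exact HF).
  assert (H2 : 2 * tau * w + 2 * r * tau ^ 2 * cos w * sin w = 0)
    by (apply (f_equal snd) in HF; exact HF).
  clear HF.
  assert (N : cos w ^ 2 + sin w ^ 2 = 1) by (pose proof (sin2_cos2 w); unfold Rsqr in *; lra).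
  set (c := cos w) in *. set (sn := sin w) in *.
  set (p := tau * c - w * sn). set (q := tau * sn + w * c).
  assert (A : p^2 - q^2 = r * tau^2).
  { assert (id : p^2 - q^2 = (tau^2-w^2)*(c^2-sn^2) - (2*tau*w)*(2*c*sn)) by (unfold p, q; ring).
    assert (e1 : tau^2-w^2 = r*tau^2*(c^2-sn^2)) by lra.
    assert (e2 : 2*tau*w = -(2*r*tau^2*c*sn)) by lra.
    rewrite id, e1, e2.
    replace (r * tau ^ 2 * (c ^ 2 - sn ^ 2) * (c ^ 2 - sn ^ 2) - - (2 * r * tau ^ 2 * c * sn) * (2 * c * sn))
      with (r*tau^2*(c^2+sn^2)^2) by ring. rewrite N. ring. }
  assert (B : 2*p*q = 0).
  { assert (id : 2*p*q = (tau^2-w^2)*(2*c*sn) + (2*tau*w)*(c^2-sn^2)) by (unfold p, q; ring).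
    assert (e1 : tau^2-w^2 = r*tau^2*(c^2-sn^2)) by lra.
    assert (e2 : 2*tau*w = -(2*r*tau^2*c*sn)) by lra.
    rewrite id, e1, e2. ring. }
  assert (Cn : p^2 + q^2 = tau^2 + w^2).
  { replace (tau^2+w^2) with ((tau^2+w^2)*(c^2+sn^2)) by (rewrite N; ring). unfold p, q; ring. }
  assert (pq : p * q = 0) by lra.
  apply Rmult_integral in pq. destruct pq as [hp|hq].
  - split. exact hp. rewrite hp in A, Cn. lra.
  - exfalso. rewrite hq in A, Cn. assert (0 < (1-r)*tau^2) by (apply Rmult_lt_0_compat; [lra| apply pow_lt; lra]). nra.
Qed.

Lemma F_zero_conv r tau w : tau * cos w - w * sin w = 0 -> tau^2 + w^2 = - r * tau^2 ->
  F r tau w = 0%C.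
Proof.
  intros hp hq.
  assert (N : cos w ^ 2 + sin w ^ 2 = 1) by (pose proof (sin2_cos2 w); unfold Rsqr in *; lra).
  unfold F. set (c := cos w) in *. set (sn := sin w) in *.
  set (p := tau * c - w * sn) in *. set (q := tau * sn + w * c).
  assert (Cn : p^2 + q^2 = tau^2 + w^2).
  { replace (tau^2+w^2) with ((tau^2+w^2)*(c^2+sn^2)) by (rewrite N; ring). unfold p, q; ring. }
  rewrite hp in Cn.
  assert (Q : q^2 = - r * tau^2) by lra.
  assert (id1 : (tau^2-w^2)*(c^2+sn^2)^2 = (p^2-q^2)*(c^2-sn^2) + 4*p*q*c*sn) by (unfold p, q; ring).
  assert (id2 : (2*tau*w)*(c^2+sn^2)^2 = (p^2-q^2)*(-2*c*sn) + 2*p*q*(c^2-sn^2)) by (unfold p, q; ring).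
  rewrite N, hp, Q in id1, id2.
  unfold RtoC. f_equal; nra.
Qed.

Theorem mainTheorem8 (alpha beta : R)
  (halpha : alpha < 2)
  (hbeta1 : alpha - 1 < beta) (hbeta2 : beta < alpha ^ 2 / 4)
  (hr1 : (alpha - sqrt (alpha ^ 2 - 4 * beta)) / 2 < -1) :
  let s := Rabs (alpha - sqrt (alpha ^ 2 - 4 * beta)) in
  let omega0 := asin (sqrt (2 / s)) in
  let tau0 := asin (sqrt (2 / s)) * sqrt (2 / (s - 2)) in
  (forall tau omega : R, 0 < tau -> 0 < omega ->
     Phi Hdirac alpha beta tau (imag omega) = 0 ->
     0 < tan omega /\ tau = omega * tan omega)
  /\ tau0 = omega0 * tan omega0
  /\ 0 < tau0
  /\ Phi Hdirac alpha beta tau0 (imag omega0) = 0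
  /\ (forall tau : R, 0 < tau ->
        (exists omega : R, Phi Hdirac alpha beta tau (imag omega) = 0) ->
        tau0 <= tau).
Proof.
  intros s omega0 tau0.
  set (sq := sqrt (alpha ^ 2 - 4 * beta)) in *.
  assert (HD : 0 < alpha ^ 2 - 4 * beta) by lra.
  assert (Hsq2 : sq ^ 2 = alpha ^ 2 - 4 * beta) by (apply pow2_sqrt; lra).
  assert (Hsq0 : 0 <= sq) by apply sqrt_pos.
  set (r1 := (alpha - sq) / 2) in *. set (r2 := (alpha + sq) / 2).
  assert (Hs : s = - 2 * r1).
  { unfold s. rewrite Rabs_left. unfold r1; lra. unfold r1 in hr1; lra. }
  assert (Hs2 : 2 < s) by lra.
  assert (Hr12 : r1 <= r2) by (unfold r1, r2; lra).
  assert (Hr2 : r2 < 1).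
  { assert (E : (r1 - 1) * (r2 - 1) = beta - alpha + 1) by (unfold r1, r2; field_simplify; rewrite Hsq2; field).
    assert (r1 - 1 < 0) by lra. nra. }
  assert (Hphi : forall tau w, Phi Hdirac alpha beta tau (imag w) = Cmult (F r1 tau w) (F r2 tau w)).
  { intros. rewrite <- Phi_factor. f_equal; unfold r1, r2; nra. }
  assert (Hroot : forall tau w, 0 < tau -> Phi Hdirac alpha beta tau (imag w) = 0%C ->
     exists r, r1 <= r < 1 /\ tau * cos w - w * sin w = 0 /\ tau^2 + w^2 = - r * tau^2).
  { intros tau w Ht H. rewrite Hphi in H. apply Cmult_zero in H. destruct H as [H|H].
    - exists r1. split. lra. apply F_zero_real; auto; lra.
    - exists r2. split. lra. apply F_zero_real; auto; lra. }
  set (sg := sqrt (2 / s)).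
  set (t0 := sqrt (2 / (s - 2))).
  assert (Hsg2 : sg ^ 2 = 2 / s) by (apply pow2_sqrt; apply Rlt_le, Rdiv_lt_0_compat; lra).
  assert (Hsg0 : 0 < sg) by (apply sqrt_lt_R0, Rdiv_lt_0_compat; lra).
  assert (Hsg1 : sg < 1).
  { assert (2 / s < 1) by (apply (Rmult_lt_reg_r s); [lra|]; field_simplify; lra). nra. }
  assert (Ht02 : t0 ^ 2 = 2 / (s - 2)) by (apply pow2_sqrt; apply Rlt_le, Rdiv_lt_0_compat; lra).
  assert (Ht00 : 0 < t0) by (apply sqrt_lt_R0, Rdiv_lt_0_compat; lra).
  assert (Hsin0 : sin omega0 = sg) by (apply sin_asin; lra).
  set (c0 := sqrt (1 - 2 / s)).
  assert (Hcos0 : cos omega0 = c0).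
  { unfold omega0. fold sg. rewrite cos_asin by lra. unfold c0, Rsqr. f_equal. rewrite <- Hsg2. fold sg. ring. }
  assert (Hc00 : 0 < c0).
  { apply sqrt_lt_R0. assert (2 / s < 1) by (apply (Rmult_lt_reg_r s); [lra|]; field_simplify; lra). lra. }
  assert (Hsgt : sg = t0 * c0).
  { unfold sg, t0, c0. rewrite <- sqrt_mult_alt by (apply Rlt_le, Rdiv_lt_0_compat; lra).
    f_equal. field. lra. }
  assert (Hb0 : - (PI / 2) <= omega0 <= PI / 2) by apply asin_bound.
  assert (Hw0 : 0 < omega0).
  { destruct (Rle_or_lt omega0 0) as [h|h]; [|exact h]. exfalso.
    destruct h as [h|h].
    - pose proof (sin_increasing_1 omega0 0) as K. rewrite sin_0 in K.
      pose proof PI_RGT_0. assert (sin omega0 < 0) by (apply K; lra). lra.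
    - rewrite h, sin_0 in Hsin0. lra. }
  assert (Htau0 : tau0 = omega0 * t0) by reflexivity.
  assert (Htan0 : tan omega0 = t0).
  { unfold tan. rewrite Hsin0, Hcos0, Hsgt. field. lra. }
  split; [| split; [| split; [| split]]].
  - intros tau w Ht Hw H. destruct (Hroot tau w Ht H) as [r [Hr [Hp Hq]]].
    assert (N : cos w ^ 2 + sin w ^ 2 = 1) by (pose proof (sin2_cos2 w); unfold Rsqr in *; lra).
    assert (Hsn : sin w <> 0).
    { intro h. rewrite h in Hp, N. assert (cos w = 0) by nra. rewrite H0 in N. lra. }
    assert (Hc : cos w <> 0).
    { intro h. rewrite h in Hp. assert (sin w = 0) by nra. auto. }
    assert (Htan : tan w = tau / w).
    { unfold tan. apply (Rmult_eq_reg_r (w * cos w)); [|apply Rmult_integral_contrapositive; split; lra]. field_simplify; [lra|lra|auto]. }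
    rewrite Htan. split. apply Rdiv_lt_0_compat; lra. field. lra.
  - rewrite Htan0. exact Htau0.
  - rewrite Htau0. apply Rmult_lt_0_compat; lra.
  - rewrite Hphi. fold omega0.
    rewrite (F_zero_conv r1 tau0 omega0).
    + unfold Cmult; simpl. unfold RtoC. f_equal; ring.
    + rewrite Hsin0, Hcos0, Htau0, Hsgt. ring.
    + rewrite Htau0. replace (- r1) with (s/2) by lra.
      replace ((omega0 * t0) ^ 2) with (omega0^2 * t0^2) by ring. rewrite Ht02. field. lra.
  - intros tau Ht [w Hw]. destruct (Hroot tau w Ht Hw) as [r [Hr [Hp Hq]]].
    set (a := Rabs w).
    assert (Hwn : w <> 0).
    { intro h. rewrite h, cos_0 in Hp. lra. }
    assert (Ha0 : 0 < a) by (apply Rabs_pos_lt; auto).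
    assert (Ha2 : a ^ 2 = w ^ 2) by (unfold a; rewrite <- Rsqr_pow2, <- Rsqr_abs, Rsqr_pow2; auto).
    assert (Hpa : tau * cos a - a * sin a = 0).
    { unfold a. destruct (Rle_or_lt 0 w).
      - rewrite Rabs_right by lra. auto.
      - rewrite Rabs_left by lra. rewrite cos_neg, sin_neg. lra. }
    assert (Hle : tau^2 + a^2 <= s/2 * tau^2).
    { rewrite Ha2, Hq. replace (s/2) with (-r1) by lra. nra. }
    assert (Hat : a * t0 <= tau).
    { assert ((a*t0)^2 <= tau^2).
      { replace ((a*t0)^2) with (a^2 * t0^2) by ring. rewrite Ht02.
        apply (Rmult_le_reg_r (s-2)); [lra|]. field_simplify; lra. }
      nra. }
    assert (Hao : omega0 <= a).
    { destruct (Rle_or_lt omega0 a) as [h|h]; [exact h|exfalso].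
      pose proof PI_RGT_0.
      assert (sin a < sg) by (rewrite <- Hsin0; apply sin_increasing_1; lra).
      assert (c0 < cos a) by (rewrite <- Hcos0; apply cos_decreasing_1; lra).
      assert (tau * cos a < a * t0 * cos a).
      { rewrite Hsgt in H0. nra. }
      nra. }
    rewrite Htau0. nra.
Qed.
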